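(* Let $h,p,K>0$ and define $H(x)=h\max(x,0)+p\max(-x,0)$ and $\delta(u)=1$ if $u>0$, $\delta(u)=0$ if $u=0$. Fix an initial inventory level $x_0\in\mathbb{R}$, a horizon $N\ge1$ and a demand sample path $\omega=(d_1,\dots,d_N)$ of nonnegative demands. For order quantities $u_1\ge 0$ define \[J_N(u_1,\omega)=H(x_1)+K\delta(u_1)+\min_{u_2,\dots,u_N\ge 0}\sum_{i=2}^N\big(H(x_i)+K\delta(u_i)\big),\] where $x_i=x_{i-1}-d_i+u_i$ for $i=1,\dots,N$. Then $J_N(u_1,\omega)$ is $K$-convex in $u_1$ on $u_1>0$, i.e. for all $0<u_1<u_1'<u_1''$, \[K+J_N(u_1'',\omega)\ge J_N(u_1',\omega)+\frac{u_1''-u_1'}{u_1'-u_1}\big(J_N(u_1',\omega)-J_N(u_1,\omega)\big).\]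
   Context: This is a periodic-review inventory model with fixed setup cost $K$ per order, holding cost rate $h$, backlog penalty rate $p$, full backlogging; $x_i$ is the inventory level at the end of period $i$, $u_i$ the order quantity placed at the beginning of period $i$, $d_i$ the demand in period $i$. *)

(* Defs.v *)
From Stdlib Require Import Reals List Arith.
From Coquelicot Require Import Coquelicot.
Open Scope R_scope.

Definition Hcost (h p x : R) : R := h * Rmax x 0 + p * Rmax (- x) 0.

(* delta(u) = 1 if u > 0, 0 otherwise (only used for u >= 0) *)
Definition delta (u : R) : R := if Rlt_dec 0 u then 1 else 0.

Fixpoint traj (x0 : R) (d u : nat -> R) (i : nat) : R :=
  match i with
  | O => x0
  | S k => traj x0 d u k - d (S k) + u (S k)
  end.

Definition ctrl (u1 : R) (v : nat -> R) (i : nat) : R :=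
  if Nat.eqb i 1 then u1 else v i.

Definition tail_cost (h p K x0 : R) (d : nat -> R) (N : nat) (u : nat -> R) : R :=
  fold_right Rplus 0
    (map (fun i => Hcost h p (traj x0 d u i) + K * delta (u i)) (seq 2 (N - 1))).

(* J_N(u1, omega) = H(x1) + K delta(u1) + min_{u2..uN >= 0} tail cost.
   The minimum is taken as the infimum (Glb_Rbar) over feasible tails. *)
Definition JN (h p K x0 : R) (d : nat -> R) (N : nat) (u1 : R) : R :=
  Hcost h p (traj x0 d (ctrl u1 (fun _ => 0)) 1) + K * delta u1
  + real (Glb_Rbar (fun c => exists v : nat -> R,
        (forall i, (2 <= i <= N)%nat -> 0 <= v i) /\
        c = tail_cost h p K x0 d N (ctrl u1 v))).

(* Main.v *)
Require Import Defs.
From Stdlib Require Import Reals List Arith Lra Lia Classical.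
From Coquelicot Require Import Coquelicot.
Open Scope R_scope.

Fixpoint cost (h p K : R) (d v : nat -> R) (k n : nat) (y : R) {struct n} : R :=
  match n with
  | O => 0
  | S n' => Hcost h p (y - d (S k) + v (S k)) + K * delta (v (S k))
            + cost h p K d v (S k) n' (y - d (S k) + v (S k))
  end.

Definition Cset h p K d k n (y c : R) : Prop :=
  exists v, (forall j, (k < j <= k + n)%nat -> 0 <= v j) /\ c = cost h p K d v k n y.

Definition KC (K : R) (F : R -> R -> Prop) : Prop :=
  forall a b c A C eps, a < b -> b < c -> 0 < eps -> F a A -> F c C ->
   exists B, F b B /\ (c-a)*B <= (c-b)*A + (b-a)*(K+C) + eps.

Definition Mf (K e : R) (F : R -> R -> Prop) (y c : R) : Prop :=
  exists u phi, 0 <= u /\ F (y - e + u) phi /\ c = K * delta u + phi.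

Definition Hf (h p : R) (F : R -> R -> Prop) (y c : R) : Prop :=
  exists c', F y c' /\ c = Hcost h p y + c'.

Lemma KC_ext K (F G : R -> R -> Prop) :
  (forall y c, F y c <-> G y c) -> KC K F -> KC K G.
Proof.
  intros E HF a b c A C eps H1 H2 H3 HA HC.
  apply E in HA; apply E in HC.
  destruct (HF a b c A C eps H1 H2 H3 HA HC) as [B [HB HB']].
  exists B; split; [apply E|]; assumption.
Qed.

Lemma delta_01 u : 0 <= delta u <= 1.
Proof. unfold delta; destruct (Rlt_dec 0 u); lra. Qed.

Lemma delta_pos u : 0 < u -> delta u = 1.
Proof. unfold delta; destruct (Rlt_dec 0 u); lra. Qed.

Lemma delta_0 : delta 0 = 0.
Proof. unfold delta; destruct (Rlt_dec 0 0); lra. Qed.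

Lemma max_conv a b c : a < b -> b < c ->
  (c-a) * Rmax b 0 <= (c-b) * Rmax a 0 + (b-a) * Rmax c 0.
Proof.
  intros; unfold Rmax;
  destruct (Rle_dec b 0); destruct (Rle_dec a 0); destruct (Rle_dec c 0); nra.
Qed.

Lemma H_conv h p a b c : 0 <= h -> 0 <= p -> a < b -> b < c ->
  (c-a) * Hcost h p b <= (c-b) * Hcost h p a + (b-a) * Hcost h p c.
Proof.
  intros. unfold Hcost.
  pose proof (max_conv a b c H1 H2).
  pose proof (max_conv (-c) (-b) (-a) ltac:(lra) ltac:(lra)).
  replace (-a - -c) with (c-a) in H4 by ring.
  replace (-a - -b) with (b-a) in H4 by ring.
  replace (-b - -c) with (c-b) in H4 by ring.
  assert (h * ((c-a) * Rmax b 0) <= h * ((c-b) * Rmax a 0 + (b-a) * Rmax c 0))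
    by (apply Rmult_le_compat_l; lra).
  assert (p * ((c-a) * Rmax (-b) 0) <= p * ((b-a) * Rmax (-c) 0 + (c-b) * Rmax (-a) 0))
    by (apply Rmult_le_compat_l; lra).
  replace ((c-a) * (h * Rmax b 0 + p * Rmax (- b) 0)) with
    (h * ((c-a) * Rmax b 0) + p * ((c-a) * Rmax (-b) 0)) by ring.
  replace ((c - b) * (h * Rmax a 0 + p * Rmax (- a) 0) + (b - a) * (h * Rmax c 0 + p * Rmax (- c) 0))
   with (h * ((c-b) * Rmax a 0 + (b-a) * Rmax c 0) + p * ((b-a) * Rmax (-c) 0 + (c-b) * Rmax (-a) 0)) by ring.
  lra.
Qed.

Lemma KC_H K h p F : 0 <= h -> 0 <= p -> KC K F -> KC K (Hf h p F).
Proof.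
  intros Hh Hp HF a b c A C eps H1 H2 H3 [ca [Ha ->]] [cc [Hc ->]].
  destruct (HF a b c ca cc eps H1 H2 H3 Ha Hc) as [cb [Hb Hb']].
  exists (Hcost h p b + cb); split.
  - exists cb; split; auto.
  - pose proof (H_conv h p a b c Hh Hp H1 H2). nra.
Qed.
Lemma KC_M K e F : 0 <= K -> KC K F -> KC K (Mf K e F).
Proof.
  intros HK HF a b c A C eps H1 H2 H3 [u [pa [Hu [Ha HA]]]] [u' [pc [Hu' [Hc HC]]]].
  pose proof (delta_01 u) as Du. pose proof (delta_01 u') as Du'.
  assert (HCp : pc <= C) by (subst C; nra).
  assert (HAp : pa <= A) by (subst A; nra).
  destruct (Rlt_or_le A (K + pc)) as [Hlt|Hge].
  2:{ exists (K + pc); split.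
      - exists (c + u' - b), pc. split; [lra|]. split.
        + replace (b - e + (c + u' - b)) with (c - e + u') by ring; exact Hc.
        + rewrite delta_pos by lra; ring.
      - assert ((c-b)*(K+pc) <= (c-b)*A) by (apply Rmult_le_compat_l; lra).
        assert ((b-a)*(K+pc) <= (b-a)*(K+C)) by (apply Rmult_le_compat_l; lra).
        nra. }
  destruct (Rle_or_lt b (a+u)) as [Hw|Hw].
  - exists (K * delta (a + u - b) + pa); split.
    + exists (a + u - b), pa. split; [lra|]. split; [|reflexivity].
      replace (b - e + (a + u - b)) with (a - e + u) by ring; exact Ha.
    + assert (Hd : delta u = 1) by (apply delta_pos; lra).
      pose proof (delta_01 (a+u-b)).
      assert (HB : K * delta (a + u - b) + pa <= A) by (subst A; rewrite Hd; nra).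
      assert ((c-b)*(K * delta (a + u - b) + pa) <= (c-b)*A) by (apply Rmult_le_compat_l; lra).
      assert ((b-a)*(K * delta (a + u - b) + pa) <= (b-a)*(K+C)) by (apply Rmult_le_compat_l; lra).
      nra.
  - set (D := c + u' - (a + u)).
    assert (HD : 0 < D) by (unfold D; lra).
    set (eps1 := eps * D / (c - a)).
    assert (He1 : 0 < eps1) by (unfold eps1; apply Rdiv_lt_0_compat; [nra|lra]).
    destruct (HF (a - e + u) (b - e) (c - e + u') pa pc eps1 ltac:(lra) ltac:(lra) He1 Ha Hc)
      as [pb [Hb Hb']].
    exists pb; split.
    + exists 0, pb. split; [lra|]. split.
      * replace (b - e + 0) with (b - e) by ring; exact Hb.
      * rewrite delta_0; ring.
    + replace (c - e + u' - (a - e + u)) with D in Hb' by (unfold D; ring).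
      replace (c - e + u' - (b - e)) with (c + u' - b) in Hb' by ring.
      replace (b - e - (a - e + u)) with (b - (a + u)) in Hb' by ring.
      set (Q := K + pc) in *.
      set (al := (c-a)*(c+u'-b)). set (be := (c-a)*(b-(a+u))).
      set (al' := D*(c-b)). set (be' := D*(b-a)).
      assert (Hsum : al + be = al' + be') by (unfold al, be, al', be', D; ring).
      assert (Hal : al' <= al) by (unfold al, al', D; nra).
      assert (Hal0 : 0 <= al) by (unfold al; nra).
      assert (Hbe0 : 0 <= be) by (unfold be; nra).
      assert (S1 : al * pa <= al * A) by (apply Rmult_le_compat_l; lra).
      assert (S2 : (al - al') * A <= (al - al') * Q) by (apply Rmult_le_compat_l; lra).
      assert (S3 : be' * Q <= be' * (K + C)) by (apply Rmult_le_compat_l; [unfold be'; nra | unfold Q; lra]).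
      assert (S4 : (c-a) * (D * pb) <= (c-a) * ((c + u' - b) * pa + (b - (a + u)) * Q + eps1))
        by (apply Rmult_le_compat_l; lra).
      assert (E1 : (c-a) * eps1 = eps * D) by (unfold eps1; field; lra).
      assert (S5 : D * ((c-a) * pb) <= D * ((c - b) * A + (b - a) * (K + C) + eps)).
      { assert (Hx : (c-a) * ((c + u' - b) * pa + (b - (a + u)) * Q + eps1)
                    = al * pa + be * Q + eps * D) by (rewrite <- E1; unfold al, be; ring).
        rewrite Hx in S4.
        assert (Hy : D * ((c - b) * A + (b - a) * (K + C) + eps) = al' * A + be' * (K + C) + eps * D)
          by (unfold al', be'; ring).
        rewrite Hy.
        replace (D * ((c-a) * pb)) with ((c-a) * (D * pb)) by ring.
        assert (al * A + be * Q = al' * A + (al - al') * A + be * Q) by ring.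
        assert (al' * A + (al - al') * Q + be * Q = al' * A + be' * Q) by (rewrite <- ?Rmult_plus_distr_r; nra).
        lra. }
      apply Rmult_le_reg_l in S5; lra.
Qed.
Lemma cost_ext h p K d n : forall k y v v',
  (forall j, (k < j <= k + n)%nat -> v j = v' j) ->
  cost h p K d v k n y = cost h p K d v' k n y.
Proof.
  induction n as [|n IH]; intros k y v v' E; simpl; [reflexivity|].
  rewrite (E (S k)) by lia.
  rewrite (IH (S k) _ v v') by (intros; apply E; lia).
  reflexivity.
Qed.

Lemma cost_nonneg h p K d n : 0 < h -> 0 < p -> 0 < K -> forall k y v,
  (forall j, (k < j <= k + n)%nat -> 0 <= v j) -> 0 <= cost h p K d v k n y.
Proof.
  intros hh hp hK. induction n as [|n IH]; intros k y v Hv; simpl; [lra|].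
  pose proof (IH (S k) (y - d (S k) + v (S k)) v ltac:(intros; apply Hv; lia)).
  pose proof (delta_01 (v (S k))).
  assert (0 <= Hcost h p (y - d (S k) + v (S k))).
  { unfold Hcost. pose proof (Rmax_r (y - d (S k) + v (S k)) 0).
    pose proof (Rmax_r (- (y - d (S k) + v (S k))) 0). nra. }
  nra.
Qed.

Lemma Cset_0 h p K d k y c : Cset h p K d k 0 y c <-> c = 0.
Proof.
  split.
  - intros [v [_ ->]]; reflexivity.
  - intros ->. exists (fun _ => 0). split; [intros; lra | reflexivity].
Qed.

Lemma Cset_S h p K d k n y c :
  Cset h p K d k (S n) y c <-> Mf K (d (S k)) (Hf h p (Cset h p K d (S k) n)) y c.
Proof.
  split.
  - intros [v [Hv ->]].
    exists (v (S k)), (Hcost h p (y - d (S k) + v (S k)) + cost h p K d v (S k) n (y - d (S k) + v (S k))).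
    split; [apply Hv; lia|]. split.
    + exists (cost h p K d v (S k) n (y - d (S k) + v (S k))). split; [|reflexivity].
      exists v. split; [intros; apply Hv; lia | reflexivity].
    + simpl. ring.
  - intros [u [phi [Hu [[c' [[v' [Hv' ->]] ->]] ->]]]].
    exists (fun j => if Nat.eqb j (S k) then u else v' j). split.
    + intros j Hj. destruct (Nat.eqb j (S k)) eqn:E; [assumption|]. apply Hv'.
      apply Nat.eqb_neq in E. lia.
    + simpl. rewrite Nat.eqb_refl.
      rewrite (cost_ext h p K d n (S k) _ (fun j => if Nat.eqb j (S k) then u else v' j) v').
      * ring.
      * intros j Hj. assert (Nat.eqb j (S k) = false) as -> by (apply Nat.eqb_neq; lia). reflexivity.
Qed.

Lemma KC_Cset h p K d n : 0 < h -> 0 < p -> 0 < K -> forall k, KC K (Cset h p K d k n).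
Proof.
  intros hh hp hK. induction n as [|n IH]; intros k.
  - eapply KC_ext. { intros y c; symmetry; apply Cset_0. }
    intros a b c A C eps H1 H2 H3 -> ->. exists 0. split; [reflexivity|]. nra.
  - eapply KC_ext. { intros y c; symmetry; apply Cset_S. }
    apply KC_M; [lra|]. apply KC_H; [lra|lra|]. apply IH.
Qed.

Lemma glb_fin (E : R -> Prop) : (exists x, E x) -> (forall x, E x -> 0 <= x) ->
  (forall x, E x -> real (Glb_Rbar E) <= x) /\
  (forall eps, 0 < eps -> exists x, E x /\ x < real (Glb_Rbar E) + eps).
Proof.
  intros [x0 Hx0] Hnn.
  destruct (Glb_Rbar_correct E) as [Hlb Hgr].
  destruct (Glb_Rbar E) as [m| |] eqn:Eq.
  - simpl. split.
    + intros x Hx. exact (Hlb x Hx).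
    + intros eps He. destruct (classic (exists x, E x /\ x < m + eps)) as [Hy|Hn]; [exact Hy|].
      exfalso. assert (Hl : Rbar_le (m + eps) m).
      { apply Hgr. intros x Hx. simpl. destruct (Rle_or_lt (m+eps) x); [assumption|].
        exfalso; apply Hn; exists x; split; assumption. }
      simpl in Hl. lra.
  - exfalso. exact (Hlb x0 Hx0).
  - exfalso. assert (Hl : Rbar_le 0 m_infty). { apply Hgr. intros x Hx. simpl. apply Hnn; auto. }
    exact Hl.
Qed.

Lemma tail_eq h p K x0 d u n : forall k,
  fold_right Rplus 0 (map (fun i => Hcost h p (traj x0 d u i) + K * delta (u i)) (seq (S k) n))
  = cost h p K d u k n (traj x0 d u k).
Proof.
  induction n as [|n IH]; intros k; [reflexivity|].
  cbn [seq map fold_right cost]. rewrite IH. reflexivity.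
Qed.
Lemma traj1 x0 d u1 v : traj x0 d (ctrl u1 v) 1%nat = x0 - d 1%nat + u1.
Proof. reflexivity. Qed.

Definition Eset h p K x0 d N u1 := (fun c => exists v : nat -> R,
        (forall i, (2 <= i <= N)%nat -> 0 <= v i) /\
        c = tail_cost h p K x0 d N (ctrl u1 v)).

Lemma E_iff h p K x0 d N u1 c : (1 <= N)%nat ->
  Eset h p K x0 d N u1 c <-> Cset h p K d 1 (N-1) (x0 - d 1%nat + u1) c.
Proof.
  intros HN. unfold Eset, tail_cost. split.
  - intros [v [Hv ->]]. exists (ctrl u1 v). split.
    + intros j Hj. unfold ctrl. assert (Nat.eqb j 1 = false) as -> by (apply Nat.eqb_neq; lia).
      apply Hv; lia.
    + rewrite (tail_eq h p K x0 d (ctrl u1 v) (N-1) 1%nat). rewrite traj1. reflexivity.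
  - intros [w [Hw ->]]. exists w. split.
    + intros i Hi. apply Hw; lia.
    + rewrite (tail_eq h p K x0 d (ctrl u1 w) (N-1) 1%nat). rewrite traj1.
      apply cost_ext. intros j Hj. unfold ctrl.
      assert (Nat.eqb j 1 = false) as -> by (apply Nat.eqb_neq; lia). reflexivity.
Qed.

Lemma JN_eq h p K x0 d N u : 0 < u ->
  JN h p K x0 d N u = Hcost h p (x0 - d 1%nat + u) + K + real (Glb_Rbar (Eset h p K x0 d N u)).
Proof.
  intros Hu. unfold JN. rewrite traj1, delta_pos by exact Hu. unfold Eset. ring.
Qed.

Lemma Eset_props h p K x0 d N u : 0 < h -> 0 < p -> 0 < K -> (1 <= N)%nat ->
  (forall x, Eset h p K x0 d N u x -> real (Glb_Rbar (Eset h p K x0 d N u)) <= x) /\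
  (forall eps, 0 < eps -> exists x, Eset h p K x0 d N u x /\ x < real (Glb_Rbar (Eset h p K x0 d N u)) + eps).
Proof.
  intros hh hp hK HN. apply glb_fin.
  - exists (tail_cost h p K x0 d N (ctrl u (fun _ => 0))). exists (fun _ => 0). split; [intros; lra|reflexivity].
  - intros x Hx. apply (E_iff h p K x0 d N u x HN) in Hx. destruct Hx as [v [Hv ->]].
    apply cost_nonneg; auto.
Qed.

Lemma eps_lemma X Y L : 0 < L -> (forall eps, 0 < eps -> X <= Y + eps * L) -> X <= Y.
Proof.
  intros HL H. destruct (Rle_or_lt X Y) as [|Hlt]; [assumption|].
  exfalso. specialize (H ((X - Y) / (2 * L))).
  assert (0 < (X - Y) / (2 * L)) by (apply Rdiv_lt_0_compat; lra).
  specialize (H H0). replace ((X - Y) / (2 * L) * L) with ((X - Y)/2) in H by (field; lra). lra.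
Qed.

Theorem lemma1 (h p K x0 : R) (N : nat) (d : nat -> R)
  (hh : 0 < h) (hp : 0 < p) (hK : 0 < K) (hN : (1 <= N)%nat)
  (hd : forall i, (1 <= i <= N)%nat -> 0 <= d i)
  (u1 u1' u1'' : R) (h1 : 0 < u1) (h12 : u1 < u1') (h23 : u1' < u1'') :
  K + JN h p K x0 d N u1'' >=
  JN h p K x0 d N u1'
  + (u1'' - u1') / (u1' - u1) * (JN h p K x0 d N u1' - JN h p K x0 d N u1).
Proof.
  rewrite !JN_eq by lra.
  set (a := u1) in *. set (b := u1') in *. set (c := u1'') in *.
  set (ma := real (Glb_Rbar (Eset h p K x0 d N a))).
  set (mb := real (Glb_Rbar (Eset h p K x0 d N b))).
  set (mc := real (Glb_Rbar (Eset h p K x0 d N c))).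
  set (Ga := Hcost h p (x0 - d 1%nat + a) + ma).
  set (Gb := Hcost h p (x0 - d 1%nat + b) + mb).
  set (Gc := Hcost h p (x0 - d 1%nat + c) + mc).
  assert (Key : (c - a) * Gb <= (c - b) * Ga + (b - a) * (K + Gc)).
  { apply (eps_lemma _ _ (c - a + 1)); [lra|]. intros eps He.
    destruct (Eset_props h p K x0 d N a hh hp hK hN) as [_ Pa].
    destruct (Eset_props h p K x0 d N b hh hp hK hN) as [Pb _].
    destruct (Eset_props h p K x0 d N c hh hp hK hN) as [_ Pc].
    destruct (Pa eps He) as [A [HA HA']]. destruct (Pc eps He) as [C [HC HC']].
    fold ma in HA'. fold mc in HC'.
    pose proof (KC_H K h p _ ltac:(lra) ltac:(lra) (KC_Cset h p K d (N-1) hh hp hK 1%nat)) as KCH.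
    destruct (KCH (x0 - d 1%nat + a) (x0 - d 1%nat + b) (x0 - d 1%nat + c)
                 (Hcost h p (x0 - d 1%nat + a) + A) (Hcost h p (x0 - d 1%nat + c) + C) eps
                 ltac:(lra) ltac:(lra) He) as [B [[cb [Hcb ->]] HB]].
    { exists A. split; [apply E_iff; auto | reflexivity]. }
    { exists C. split; [apply E_iff; auto | reflexivity]. }
    apply (E_iff h p K x0 d N b cb hN) in Hcb. apply Pb in Hcb. fold mb in Hcb.
    replace (x0 - d 1%nat + c - (x0 - d 1%nat + a)) with (c - a) in HB by ring.
    replace (x0 - d 1%nat + c - (x0 - d 1%nat + b)) with (c - b) in HB by ring.
    replace (x0 - d 1%nat + b - (x0 - d 1%nat + a)) with (b - a) in HB by ring.
    assert ((c-a) * Gb <= (c-a) * (Hcost h p (x0 - d 1%nat + b) + cb))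
      by (apply Rmult_le_compat_l; unfold Gb; lra).
    assert ((c-b) * (Hcost h p (x0 - d 1%nat + a) + A) <= (c-b) * (Ga + eps))
      by (apply Rmult_le_compat_l; unfold Ga; lra).
    assert ((b-a) * (K + (Hcost h p (x0 - d 1%nat + c) + C)) <= (b-a) * (K + Gc + eps))
      by (apply Rmult_le_compat_l; unfold Gc; lra).
    assert ((c-b)*(Ga+eps) + (b-a)*(K+Gc+eps) + eps = (c - b) * Ga + (b - a) * (K + Gc) + eps * (c - a + 1)) by ring.
    lra. }
  apply Rle_ge.
  apply (Rmult_le_reg_l (b - a)); [lra|].
  replace ((b - a) * (Hcost h p (x0 - d 1%nat + b) + K + mb +
     (c - b) / (b - a) * (Hcost h p (x0 - d 1%nat + b) + K + mb - (Hcost h p (x0 - d 1%nat + a) + K + ma))))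
    with ((b - a) * (Gb + K) + (c - b) * (Gb - Ga)) by (unfold Ga, Gb; field; lra).
  replace ((b - a) * (K + (Hcost h p (x0 - d 1%nat + c) + K + mc))) with ((b-a)*(K + Gc + K)) by (unfold Gc; ring).
  lra.
Qed.
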